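(* There is a universal constant $C_1>1$ such that the following holds. Fix any $\rho,\delta\in(0,1)$. For every sufficiently large $d\in\mathbb{N}$, all $h,N\in\mathbb{N}$, and every $(u_1,u_2)\in\mathrm{Bases}^{2d}_{\rho,\delta}$, $$\Pr\left[\|R_{h,N}u_1\|_\infty\le \tfrac{1}{\sqrt{\delta d}}\ \text{and}\ \|R_{h,N}u_2\|_\infty\le\tfrac{1}{\sqrt{\delta d}}\right]\le C_1^h\,(\rho^4\delta d)^{-h},$$ where $R_{h,N}$ is an $h\times N$ matrix with i.i.d. uniform $\pm1$ entries.
   Context: $\mathbb{S}^{N-1}$ is the Euclidean unit sphere in $\mathbb{R}^N$. For $d\le N$, $S^N_d:=\{u\in\mathbb{R}^N:\|u\|_2=1,\ \|u\|_0\le d\}$, where $\|u\|_0$ is the number of nonzero coordinates and $\mathrm{supp}(u)$ the set of nonzero coordinates. For $\rho,\delta>0$, $\mathrm{Comp}^d_{\rho,\delta}:=\{u\in S^N_d : \exists\,\overline{T}\subseteq\mathrm{supp}(u),\ |\overline{T}|\le\delta d,\ \|u_{\mathrm{supp}(u)\setminus\overline{T}}\|_2\le\rho\}$ (here $u_A$ is the restriction of $u$ to coordinates in $A$). $\mathrm{Bases}^{d'}_{\rho,\delta}$ is the set of pairs $(u_1,u_2)\in\mathbb{S}^{N-1}\times\mathbb{S}^{N-1}$ such that $u_1,u_2$ are orthonormal, $|\mathrm{supp}(u_1)\cup\mathrm{supp}(u_2)|\le d'$, and $\mathrm{span}\{u_1,u_2\}\cap\mathrm{Comp}^{d'}_{\rho,\delta}=\emptyset$.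 *)

(* Defs.v *)
From HB Require Import structures.
From mathcomp Require Import all_boot all_order all_algebra.
From mathcomp Require Import Rstruct.
From Stdlib Require Import Rdefinitions.
Notation R := Rdefinitions.R.
Set Implicit Arguments. Unset Strict Implicit. Unset Printing Implicit Defensive.
Import Order.TTheory GRing.Theory Num.Theory.
Local Open Scope ring_scope.

Definition norm2 (N : nat) (u : 'cV[R]_N) : R := Num.sqrt (\sum_(i < N) u i 0 ^+ 2).
Definition norminf (N : nat) (u : 'cV[R]_N) : R := \big[Num.max/0]_(i < N) `|u i 0|.
Definition supp (N : nat) (u : 'cV[R]_N) : {set 'I_N} := [set i | u i 0 != 0].
Definition restr (N : nat) (A : {set 'I_N}) (u : 'cV[R]_N) : 'cV[R]_N :=
  \col_i (if i \in A then u i 0 else 0).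
Definition dotv (N : nat) (u v : 'cV[R]_N) : R := \sum_(i < N) u i 0 * v i 0.

Definition sparse_sphere (N d : nat) (u : 'cV[R]_N) : Prop :=
  norm2 u = 1 /\ (#|supp u| <= d)%nat.

Definition Comp (N d : nat) (rho delta : R) (u : 'cV[R]_N) : Prop :=
  sparse_sphere d u /\
  exists T : {set 'I_N}, [/\ T \subset supp u, (#|T|%:R <= delta * d%:R)
                            & norm2 (restr (supp u :\: T) u) <= rho].

Definition Bases (N d' : nat) (rho delta : R) (u1 u2 : 'cV[R]_N) : Prop :=
  [/\ norm2 u1 = 1, norm2 u2 = 1, dotv u1 u2 = 0,
      (#|supp u1 :|: supp u2| <= d')%nat
    & forall a b : R, ~ Comp d' rho delta (a *: u1 + b *: u2)].

Definition sgn_mx (h N : nat) (B : 'M[bool]_(h, N)) : 'M[R]_(h, N) :=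
  \matrix_(i, j) (if B i j then 1 else -1).

Definition prob_sign (h N : nat) (P : pred 'M[bool]_(h, N)) : R :=
  #|[set B : 'M[bool]_(h, N) | P B]|%:R / #|{: 'M[bool]_(h, N)}|%:R.

(* Main.v *)
Require Import Defs.
From HB Require Import structures.
From mathcomp Require Import all_boot all_order all_algebra.
From mathcomp Require Import Rstruct.
From Stdlib Require Import Reals Lra.
Delimit Scope nat_scope with N.
Import Order.TTheory GRing.Theory Num.Theory.

Lemma cos_bounds_std (y : R) : (Rabs y <= 1)%R ->
  (1 - y*y/2 <= cos y /\ cos y <= 1 - y*y/2 + y*y*(y*y)/24)%R.
Proof.
move=> Hy.
have Hy' : (-1 <= y <= 1)%R by move: Hy; rewrite /Rabs; case: Rcase_abs; lra.
have H1 := PI2_1.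
have := cos_bound y 0. unfold cos_approx, cos_term. simpl.
move=> H. have {H} [H2 H3] := H ltac:(lra) ltac:(lra).
split; [move: H2 | move: H3]; rewrite /Factorial.fact /INR /=; lra.
Qed.

From mathcomp Require Import lra ring.
Local Open Scope ring_scope.

Definition mcos (x : R) : R := cos x.
Definition msin (x : R) : R := sin x.
Arguments mcos x%_ring_scope.
Arguments msin x%_ring_scope.
Lemma mcos0 : mcos 0 = 1. Proof. exact: cos_0. Qed.

Lemma cos_lb (y : R) : `|y| <= 1 -> 1 - y^+2/2 <= mcos y.
Proof.
rewrite /mcos => Hy. have Hy' : (Rabs y <= 1)%R by apply/RleP; rewrite RabsE.
have [/RleP + _] := cos_bounds_std _ Hy'.
by rewrite !RminusE !RdivE !RmultE expr2.
Qed.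


Lemma cos_ub (y : R) : `|y| <= 1 -> `|mcos y| <= 1 - y^+2/3.
Proof.
rewrite /mcos => Hy. have Hy' : (Rabs y <= 1)%R by apply/RleP; rewrite RabsE.
have [/RleP + /RleP] := cos_bounds_std _ Hy'.
rewrite !RminusE !RdivE !RmultE RplusE => H1 H2.
have y2 : y * y <= 1.
  have n0 := normr_ge0 y.
  have : `|y| * `|y| <= 1 by nra.
  by rewrite -normrM ger0_norm // -expr2 sqr_ge0.
have y0 : 0 <= y * y by rewrite -expr2 sqr_ge0.
have h : y*y*(y*y) <= y*y*1 by apply: ler_wpM2l.
have H3 : cos y <= 1 - y * y / 2 + y * y * (y * y) / 24 by move: H2; rewrite !IZRposE !INRE /=.
rewrite ger0_norm; first by rewrite expr2; lra.
have H4 : 1 - y * y / 2 <= cos y by move: H1; rewrite !IZRposE !INRE /=.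
lra.
Qed.

Lemma cos_sub (a b : R) : mcos (a - b) = mcos a * mcos b + msin a * msin b.
Proof. by have := cos_minus a b; rewrite RminusE RplusE !RmultE. Qed.

Lemma cos_add (a b : R) : mcos (a + b) = mcos a * mcos b - msin a * msin b.
Proof. by have := cos_plus a b; rewrite RplusE RminusE !RmultE. Qed.

Lemma cos_addsub (a b : R) : mcos (a + b) + mcos (a - b) = 2 * mcos a * mcos b.
Proof. rewrite cos_add cos_sub; ring. Qed.

Lemma cos_le1 (x : R) : `|mcos x| <= 1.
Proof.
have [/RleP h1 /RleP h2] := COS_bound x.
rewrite ler_norml; apply/andP; split => //.
Qed.

Definition RR : Type := Rdefinitions.R.

Definition sg (b : bool) : R := if b then 1 else -1.

Definition flip {N} (j0 : 'I_N) (r : 'rV[bool]_N) : 'rV[bool]_N :=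
  \row_j (if j == j0 then ~~ r 0 j else r 0 j).

Lemma flipK N (j0 : 'I_N) : involutive (flip j0).
Proof.
move=> r; apply/matrixP => i j; rewrite !mxE (ord1 i).
by case: (j == j0); rewrite ?negbK.
Qed.

Lemma row_sum_cos_seq N (w : 'I_N -> R) (s : seq 'I_N) : uniq s ->
  \sum_(r : 'rV[bool]_N) mcos (\sum_(j <- s) sg (r 0 j) * w j)
  = #|{: 'rV[bool]_N}|%:R * \prod_(j <- s) mcos (w j).
Proof.
elim: s => [|j0 s IH] /=.
  rewrite big_nil.
  under eq_bigr do rewrite big_nil mcos0.
  by rewrite sumr_const mulr1.
move=> /andP[nj0 us].
set S := fun r : 'rV[bool]_N => \sum_(j <- s) sg (r 0 j) * w j.
have Sflip r : S (flip j0 r) = S r.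
  apply: eq_big_seq => j js; rewrite mxE.
  by have -> : (j == j0) = false by apply/negbTE; apply: contra nj0 => /eqP <-.
have E : \sum_(r : 'rV[bool]_N) mcos (\sum_(j <- j0 :: s) sg (r 0 j) * w j)
       = \sum_(r : 'rV[bool]_N) mcos (sg (r 0 j0) * w j0 + S r).
  by apply: eq_bigr => r _; rewrite big_cons.
rewrite E.
have E2 : \sum_(r : 'rV[bool]_N) mcos (sg (r 0 j0) * w j0 + S r)
        = \sum_(r : 'rV[bool]_N) mcos (sg (~~ r 0 j0) * w j0 + S r).
  rewrite (reindex_inj (inv_inj (@flipK N j0))) /=.
  by apply: eq_bigr => r _; rewrite Sflip mxE eqxx.
have E3 : \sum_(r : 'rV[bool]_N) mcos (sg (r 0 j0) * w j0 + S r) + \sum_(r : 'rV[bool]_N) mcos (sg (~~ r 0 j0) * w j0 + S r)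
        = 2 * mcos (w j0) * \sum_(r : 'rV[bool]_N) mcos (S r).
  rewrite -big_split /= mulr_sumr; apply: eq_bigr => r _.
  have key : forall a b : R, mcos (a + b) + mcos (- a + b) = 2 * mcos a * mcos b.
    by move=> a b; rewrite (addrC a b) (addrC (- a) b) cos_addsub mulrAC.
  case: (r 0 j0); rewrite /sg /= mul1r mulN1r //.
  by rewrite addrC.
rewrite -E2 in E3.
have -> : \sum_(r : 'rV[bool]_N) mcos (sg (r 0 j0) * w j0 + S r) = mcos (w j0) * \sum_(r : 'rV[bool]_N) mcos (S r).
  have h2 : 2 != 0 :> R by rewrite pnatr_eq0.
  apply: (mulfI h2).
  by rewrite mulrA -E3 -mulr2n mulr_natl.
by rewrite /S IH // big_cons mulrCA.
Qed.

Lemma row_sum_cos N (w : 'I_N -> R) :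
  \sum_(r : 'rV[bool]_N) mcos (\sum_j sg (r 0 j) * w j)
  = #|{: 'rV[bool]_N}|%:R * \prod_j mcos (w j).
Proof. exact: row_sum_cos_seq (index_enum_uniq _). Qed.

Definition K1 (M : nat) (t x : R) : R :=
  \sum_(a : 'I_M * 'I_M) mcos ((a.1%:R - a.2%:R) * t * x).
Arguments K1 M t%_ring_scope x%_ring_scope.

Lemma K1_sq M t x : K1 M t x =
  (\sum_(k < M) mcos (k%:R * t * x)) ^+ 2 + (\sum_(k < M) msin (k%:R * t * x)) ^+ 2.
Proof.
rewrite /K1 -(pair_bigA _ (fun (j k : 'I_M) => mcos ((j%:R - k%:R) * t * x))) /=.
rewrite !expr2 !big_distrlr /= -big_split; apply: eq_bigr => j _.
rewrite -big_split; apply: eq_bigr => k _ /=.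
have -> : (j%:R - k%:R) * t * x = j%:R * t * x - k%:R * t * x by ring.
by rewrite cos_sub.
Qed.

Lemma K1_ge0 M t x : 0 <= K1 M t x.
Proof. by rewrite K1_sq addr_ge0 // sqr_ge0. Qed.

Lemma K1_lb M t x : 0 <= t -> `|x| * t * M%:R <= 1/2 -> 49/64 * M%:R ^+ 2 <= K1 M t x.
Proof.
move=> t0 hx.
have hs : 7/8 * M%:R <= \sum_(k < M) mcos (k%:R * t * x).
  have -> : 7/8 * M%:R = \sum_(k < M) (7/8) :> R.
    by rewrite sumr_const card_ord mulr_natr.
  apply: ler_sum => k _.
  have hk : `|k%:R * t * x| <= 1/2.
    rewrite !normrM (ger0_norm t0) normr_nat.
    have kM : (k%:R : R) <= M%:R by rewrite ler_nat ltnW.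
    have nx := normr_ge0 x.
    have h : k%:R * (t * `|x|) <= M%:R * (t * `|x|) by apply: ler_wpM2r => //; apply: mulr_ge0.
    lra.
  have h1 : `|k%:R * t * x| <= 1 by lra.
  have := cos_lb _ h1.
  have : (k%:R * t * x) ^+ 2 <= 1/4.
    rewrite -real_normK ?num_real //.
    have := normr_ge0 (k%:R * t * x). nra.
  lra.
have M0 : 0 <= M%:R :> R by [].
rewrite K1_sq.
have := sqr_ge0 (\sum_(k < M) msin (k%:R * t * x)).
nra.
Qed.

Lemma prod_one_minus (I : Type) (s : seq I) (P : pred I) (c : I -> R) :
  (forall i, P i -> 0 <= c i <= 1) ->
  \prod_(i <- s | P i) (1 - c i) * (1 + \sum_(i <- s | P i) c i) <= 1.
Proof.
move=> hc; elim: s => [|i s IH]; first by rewrite !big_nil addr0 mulr1.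
rewrite !big_cons; case: ifP => Pi //.
have /andP[c0 c1] := hc i Pi.
set Q := \prod_(j <- s | P j) (1 - c j).
set T := \sum_(j <- s | P j) c j.
have Q0 : 0 <= Q by apply: prodr_ge0 => j Pj; have /andP[_ ?] := hc j Pj; lra.
have T0 : 0 <= T by apply: sumr_ge0 => j Pj; have /andP[? _] := hc j Pj.
have h1 : 0 <= Q * c i by apply: mulr_ge0.
have h2 : 0 <= Q * c i * (c i + T) by apply: mulr_ge0 => //; lra.
have -> : (1 - c i) * Q * (1 + (c i + T)) = Q * (1 + T) - Q * c i * (c i + T) by ring.
have IH2 : Q * (1 + T) <= 1 := IH. lra.
Qed.

Lemma core_bound N (u1 u2 : 'cV[R]_N) (S : pred 'I_N) (tau rho t a b : R) (M : nat) :
  0 <= t ->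
  (forall j, S j -> `|u1 j 0| <= tau /\ `|u2 j 0| <= tau) ->
  (forall p q, rho^+2 * (p^+2 + q^+2) <= \sum_(j | S j) (p * u1 j 0 + q * u2 j 0)^+2) ->
  2 * t * M%:R * tau <= 1 -> 1 <= t^+2 * rho^+2 / 6 ->
  `|a| <= M%:R -> `|b| <= M%:R ->
  `|\prod_j mcos (t * (a * u1 j 0 + b * u2 j 0))| <= 1 / ((1 + a^+2) * (1 + b^+2)).
Proof.
move=> t0 hS hinc htM hl ha hb.
set w := fun j => t * (a * u1 j 0 + b * u2 j 0).
have hw j : S j -> `|w j| <= 1.
  move=> Sj; have [h1 h2] := hS j Sj.
  rewrite /w normrM (ger0_norm t0).
  have := ler_normD (a * u1 j 0) (b * u2 j 0); rewrite !normrM => hD.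
  have na := normr_ge0 a; have nb := normr_ge0 b.
  have n1 := normr_ge0 (u1 j 0); have n2 := normr_ge0 (u2 j 0).
  have e1 : `|a| * `|u1 j 0| <= M%:R * tau by apply: ler_pM.
  have e2 : `|b| * `|u2 j 0| <= M%:R * tau by apply: ler_pM.
  have e3 : t * `|a * u1 j 0 + b * u2 j 0| <= t * (2 * (M%:R * tau)).
    by apply: ler_wpM2l => //; lra.
  lra.
rewrite normr_prod (bigID S) /=.
have A : \prod_(j | ~~ S j) `|mcos (w j)| <= 1.
  apply: prodr_ile1 => j _; rewrite normr_ge0 /=; exact: cos_le1.
set c := fun j => w j ^+ 2 / 6.
have hc j : S j -> 0 <= c j <= 1.
  move=> Sj; have := hw j Sj; rewrite /c -[w j ^+ 2]real_normK ?num_real //.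
  have := normr_ge0 (w j); move=> n0 h; apply/andP; split; nra.
have B : \prod_(j | S j) `|mcos (w j)| <= (\prod_(j | S j) (1 - c j)) ^+ 2.
  rewrite -prodrXl; apply: ler_prod => j Sj; rewrite normr_ge0 /=.
  apply: le_trans (cos_ub _ (hw j Sj)) _.
  rewrite /c; have := sqr_ge0 (w j ^+ 2); nra.
set P := \prod_(j | S j) (1 - c j).
have P0 : 0 <= P by apply: prodr_ge0 => j Sj; have := hc j Sj; lra.
have PL : P * (1 + \sum_(j | S j) c j) <= 1 := prod_one_minus _ (index_enum _) S c hc.
have hsum : a^+2 + b^+2 <= \sum_(j | S j) c j.
  have -> : \sum_(j | S j) c j = t^+2 / 6 * \sum_(j | S j) (a * u1 j 0 + b * u2 j 0)^+2.
    rewrite mulr_sumr; apply: eq_bigr => j _; rewrite /c /w exprMn; ring.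
  have := hinc a b.
  have ab0 : 0 <= a^+2 + b^+2 by rewrite addr_ge0 // sqr_ge0.
  have r0 := sqr_ge0 rho.  have t2 := sqr_ge0 t.
  move=> hi.
  have : t^+2 / 6 * (rho^+2 * (a^+2 + b^+2)) <= t^+2 / 6 * \sum_(j | S j) (a * u1 j 0 + b * u2 j 0)^+2.
    by apply: ler_wpM2l => //; apply: divr_ge0.
  have : 1 * (a^+2 + b^+2) <= t ^+ 2 * rho ^+ 2 / 6 * (a^+2 + b^+2) by apply: ler_wpM2r.
  have -> : t ^+ 2 / 6 * (rho ^+ 2 * (a ^+ 2 + b ^+ 2)) = t ^+ 2 * rho ^+ 2 / 6 * (a ^+ 2 + b ^+ 2) by ring.
  lra.
have P1 : P * (1 + (a^+2 + b^+2)) <= 1.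
  apply: le_trans PL; apply: ler_wpM2l => //; lra.
have PP : P ^+ 2 * ((1 + a^+2) * (1 + b^+2)) <= 1.
  have a2 := sqr_ge0 a; have b2 := sqr_ge0 b.
  have : (1 + a^+2) * (1 + b^+2) <= (1 + (a^+2 + b^+2))^+2.
    have := mulr_ge0 a2 b2; rewrite expr2; nra.
  have : (P * (1 + (a^+2 + b^+2)))^+2 <= 1.
    have y0 : 0 <= P * (1 + (a^+2 + b^+2)) by apply: mulr_ge0 => //; lra.
    rewrite expr2; nra.
  have := sqr_ge0 P. rewrite exprMn.
  move=> h0 h1 h2. 
  have : P^+2 * ((1 + a^+2) * (1 + b^+2)) <= P^+2 * (1 + (a^+2 + b^+2))^+2 by apply: ler_wpM2l.
  lra.
have D0 : 0 < (1 + a^+2) * (1 + b^+2).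
  by apply: mulr_gt0; rewrite ltr_wpDr // sqr_ge0.
have A0 : 0 <= \prod_(j | ~~ S j) `|mcos (w j)| by apply: prodr_ge0.
have B0 : 0 <= \prod_(j | S j) `|mcos (w j)| by apply: prodr_ge0.
rewrite ler_pdivlMr //.
have : \prod_(j | S j) `|mcos (w j)| * \prod_(j | ~~ S j) `|mcos (w j)| <= \prod_(j | S j) `|mcos (w j)| * 1.
  by apply: ler_wpM2l.
rewrite mulr1 => h.
have : \prod_(j | S j) `|mcos (w j)| * ((1 + a^+2) * (1 + b^+2)) <= P^+2 * ((1 + a^+2) * (1 + b^+2)).
  by apply: ler_wpM2r => //; apply: ltW.
have : \prod_(j | S j) `|mcos (w j)| * \prod_(j | ~~ S j) `|mcos (w j)| * ((1 + a^+2) * (1 + b^+2)) <= \prod_(j | S j) `|mcos (w j)| * ((1 + a^+2) * (1 + b^+2)).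
  by apply: ler_wpM2r => //; apply: ltW.
lra.
Qed.

Lemma inv_le_aux (A B c : R) : 0 < A -> 0 < B -> B <= c * A -> 1 / A <= c / B.
Proof.
move=> A0 B0 h; rewrite ler_pdivrMr // mulrAC ler_pdivlMr //; lra.
Qed.

Lemma decL1 (m : R) : 1 <= m -> 1 / (1 + m^+2) <= 3 / m - 3 / (m + 1).
Proof.
move=> m1.
have -> : 3 / m - 3 / (m + 1) = 3 / (m * (m + 1)).
  by field; apply/andP; split; apply/negP => /eqP; lra.
apply: inv_le_aux; [by have := sqr_ge0 m; lra | apply: mulr_gt0; lra | rewrite expr2; nra].
Qed.

Lemma decL2 (m : R) : 1 <= m -> 1 / (1 + m^+2) <= 3 / (m + 1) - 3 / (m + 2).
Proof.
move=> m1.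
have -> : 3 / (m + 1) - 3 / (m + 2) = 3 / ((m + 1) * (m + 2)).
  by field; apply/andP; split; apply/negP => /eqP; lra.
apply: inv_le_aux; [by have := sqr_ge0 m; lra | apply: mulr_gt0; lra | rewrite expr2; nra].
Qed.

Definition Tdec (j k : nat) : R := @id R
  (if (k <= j)%nat then 3 / (j%:R + 1 - k%:R) else 6 - 3 / (k%:R + 1 - j%:R)).

Lemma Tdec_step (j k : nat) : 1 / (1 + (j%:R - k%:R)^+2) <= Tdec j k.+1 - Tdec j k.
Proof.
rewrite /Tdec /id -[k.+1]addn1 natrD.
case: (ltngtP k j) => h.
- have -> : (k + 1 <= j)%nat by rewrite addn1.
  have hm : 1 <= j%:R - k%:R :> R.
    have : (k + 1)%:R <= j%:R :> R by rewrite ler_nat addn1.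
    rewrite natrD; lra.
  have e1 : j%:R + 1 - (k%:R + 1) = j%:R - k%:R :> R by ring.
  have e2 : j%:R + 1 - k%:R = (j%:R - k%:R) + 1 :> R by ring.
  rewrite e1 e2; exact: decL1.
- have -> : (k + 1 <= j)%nat = false by apply/negbTE; rewrite -ltnNge addn1 ltnS ltnW.
  have hm : 1 <= k%:R - j%:R :> R.
    have : (j + 1)%:R <= k%:R :> R by rewrite ler_nat addn1.
    rewrite natrD; lra.
  have e0 : (j%:R - k%:R)^+2 = (k%:R - j%:R)^+2 :> R by ring.
  have e1 : 6 - 3 / (k%:R + 1 + 1 - j%:R) - (6 - 3 / (k%:R + 1 - j%:R))
          = 3 / ((k%:R - j%:R) + 1) - 3 / ((k%:R - j%:R) + 2) :> R.
    have -> : k%:R + 1 + 1 - j%:R = (k%:R - j%:R) + 2 :> R by ring.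
    have -> : k%:R + 1 - j%:R = (k%:R - j%:R) + 1 :> R by ring.
    ring.
  rewrite e0 e1; exact: decL2.
- subst k.
  have -> : (j + 1 <= j)%nat = false by rewrite addn1 ltnn.
  have -> : j%:R + 1 + 1 - j%:R = 2 :> R by ring.
  have -> : j%:R + 1 - j%:R = 1 :> R by ring.
  rewrite subrr expr0n /= addr0; lra.
Qed.

Lemma decay_sum (M j : nat) : \sum_(k < M) 1 / (1 + (j%:R - k%:R : RR)^+2) <= 6.
Proof.
apply: (@le_trans _ _ (\sum_(k < M) (Tdec j k.+1 - Tdec j k))).
  by apply: ler_sum => k _; apply: Tdec_step.
rewrite -(big_mkord xpredT (fun k => Tdec j k.+1 - Tdec j k)) telescope_sumr //.
have T0 : 0 <= Tdec j 0.
  rewrite /Tdec /id leq0n; apply: divr_ge0 => //; rewrite subr0.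
  have : 0 <= j%:R :> R by []. lra.
suff : Tdec j M <= 6 by lra.
rewrite /Tdec /id; case: ifP => hM.
  have : M%:R <= j%:R :> R by rewrite ler_nat.
  move=> h; rewrite ler_pdivrMr; lra.
have : (j + 1)%:R <= M%:R :> R by rewrite ler_nat addn1 ltnNge hM.
rewrite natrD => h.
have : 0 <= 3 / (M%:R + 1 - j%:R) :> R by apply: divr_ge0 => //; lra.
lra.
Qed.

Lemma norm2_sq1 N (u : 'cV[R]_N) : norm2 u = 1 -> \sum_j u j 0 ^+ 2 = 1.
Proof.
rewrite /norm2 => h.
have s0 : 0 <= \sum_j u j 0 ^+ 2 by apply: sumr_ge0 => j _; apply: sqr_ge0.
by rewrite -(sqr_sqrtr s0) h expr1n.
Qed.

Lemma incomp N (d : nat) (rho delta tau : R) (u1 u2 : 'cV[R]_N) :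
  0 < tau -> 2 <= delta * (2 * d)%:R * tau ^+ 2 -> 0 <= rho ->
  Bases (2 * d) rho delta u1 u2 ->
  forall p q, rho^+2 * (p^+2 + q^+2)
     <= \sum_(j | u1 j 0 ^+ 2 + u2 j 0 ^+ 2 <= tau ^+ 2) (p * u1 j 0 + q * u2 j 0)^+2.
Proof.
move=> tau0 hdt rho0 [n1 n2 dt sc nc] p q.
set S := fun j : 'I_N => u1 j 0 ^+ 2 + u2 j 0 ^+ 2 <= tau ^+ 2.
have s1 := norm2_sq1 _ _ n1; have s2 := norm2_sq1 _ _ n2.
have d0 : \sum_j u1 j 0 * u2 j 0 = 0 by exact: dt.
set Q := p ^+ 2 + q ^+ 2.
have Q0 : 0 <= Q by rewrite addr_ge0 // sqr_ge0.
case: (leP (rho ^+ 2 * Q) (\sum_(j | S j) (p * u1 j 0 + q * u2 j 0) ^+ 2)) => // hlt.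
exfalso.
have Qp : 0 < Q.
  rewrite lt_def Q0 andbT; apply/negP => /eqP Qz.
  move: hlt; rewrite Qz mulr0 => h.
  have : 0 <= \sum_(j | S j) (p * u1 j 0 + q * u2 j 0) ^+ 2 by apply: sumr_ge0 => *; apply: sqr_ge0.
  lra.
set r := Num.sqrt Q.
have r0 : 0 < r by rewrite /r sqrtr_gt0.
have r2 : r ^+ 2 = Q by rewrite /r sqr_sqrtr // ltW.
set a := p / r; set b := q / r.
apply: (nc a b).
set v := a *: u1 + b *: u2.
have vE j : v j 0 = (p * u1 j 0 + q * u2 j 0) / r.
  rewrite /v !mxE /a /b; field; lra.
have vsum : \sum_(j | S j) v j 0 ^+ 2 < rho ^+ 2.
  have -> : \sum_(j | S j) v j 0 ^+ 2 = (\sum_(j | S j) (p * u1 j 0 + q * u2 j 0) ^+ 2) / Q.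
    rewrite mulr_suml; apply: eq_bigr => j _; rewrite vE -r2 expr_div_n //.
  rewrite ltr_pdivrMr //; lra.
split.
  split.
    rewrite /norm2.
    have -> : \sum_j v j 0 ^+ 2 = 1.
      have -> : \sum_j v j 0 ^+ 2 = a ^+ 2 * \sum_j u1 j 0 ^+ 2 + 2 * a * b * \sum_j u1 j 0 * u2 j 0
                 + b ^+ 2 * \sum_j u2 j 0 ^+ 2.
        rewrite !mulr_sumr -!big_split; apply: eq_bigr => j _ /=; rewrite /v !mxE; ring.
      rewrite s1 s2 d0 /a /b.
      have -> : (p / r) ^+ 2 * 1 + 2 * (p / r) * (q / r) * 0 + (q / r) ^+ 2 * 1 = Q / r ^+ 2.
        rewrite /Q; field; lra.
      by rewrite r2 divff //; lra.
    exact: sqrtr1.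
  apply: leq_trans sc; apply: subset_leq_card; apply/subsetP => j.
  rewrite !inE => hv; apply/negPn/negP; rewrite negb_or !negbK => /andP[/eqP h1 /eqP h2].
  by move: hv; rewrite /v !mxE h1 h2 !mulr0 addr0 eqxx.
set L := [set j | ~~ S j].
exists (supp v :&: L); split.
- exact: subsetIl.
- have hL : #|L|%:R * tau ^+ 2 <= 2.
    have -> : #|L|%:R * tau ^+ 2 = \sum_(j in L) tau ^+ 2 by rewrite sumr_const mulr_natl.
    apply: (@le_trans _ _ (\sum_(j in L) (u1 j 0 ^+ 2 + u2 j 0 ^+ 2))).
      apply: ler_sum => j; rewrite inE /S -ltNge => h; exact: ltW.
    apply: (@le_trans _ _ (\sum_j (u1 j 0 ^+ 2 + u2 j 0 ^+ 2))).
      rewrite [X in _ <= X](bigID (mem L)) /= lerDl.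
      by apply: sumr_ge0 => j _; rewrite addr_ge0 // sqr_ge0.
    by rewrite big_split /= s1 s2.
  have hT : (#|supp v :&: L| <= #|L|)%nat by apply: subset_leq_card; apply: subsetIr.
  have hT' : #|supp v :&: L|%:R <= #|L|%:R :> R by rewrite ler_nat.
  have t2 : 0 < tau ^+ 2 by apply: exprn_gt0.
  rewrite -(ler_pM2r t2); have := ler_wpM2r (ltW t2) hT'; lra.
- rewrite /norm2.
  have hs : \sum_i restr (supp v :\: (supp v :&: L)) v i 0 ^+ 2 <= \sum_(j | S j) v j 0 ^+ 2.
    rewrite [X in _ <= X]big_mkcond /=; apply: ler_sum => j _; rewrite mxE.
    case: ifP => hj.
      have : S j.
        by move: hj; rewrite !inE => /andP[h1 h2]; move: h1; rewrite h2 /= negbK.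
      by move=> ->.
    by case: (S j); rewrite expr0n /= ?sqr_ge0.
  have h0 : 0 <= \sum_i restr (supp v :\: (supp v :&: L)) v i 0 ^+ 2.
    by apply: sumr_ge0 => *; apply: sqr_ge0.
  rewrite -(ger0_norm rho0) -sqrtr_sqr ler_sqrt ?sqr_ge0 //; lra.
Qed.

Definition Xr {N} (u : 'cV[R]_N) (r : 'rV[bool]_N) : R := \sum_j sg (r 0 j) * u j 0.

Lemma lin_X N (u1 u2 : 'cV[R]_N) (al be : R) r :
  al * Xr u1 r + be * Xr u2 r = \sum_j sg (r 0 j) * (al * u1 j 0 + be * u2 j 0).
Proof. rewrite /Xr !mulr_sumr -big_split; apply: eq_bigr => j _ /=; ring. Qed.

Lemma sum_coscos N (u1 u2 : 'cV[R]_N) (A B : R) :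
  \sum_(r : 'rV[bool]_N) mcos (A * Xr u1 r) * mcos (B * Xr u2 r)
  = #|{: 'rV[bool]_N}|%:R / 2 * (\prod_j mcos (A * u1 j 0 + B * u2 j 0)
                                + \prod_j mcos (A * u1 j 0 + (- B) * u2 j 0)).
Proof.
have e x y : mcos x * mcos y = (mcos (x + y) + mcos (x - y)) / 2.
  by rewrite cos_addsub; field.
have -> : \sum_(r : 'rV[bool]_N) mcos (A * Xr u1 r) * mcos (B * Xr u2 r)
   = \sum_(r : 'rV[bool]_N) (mcos (A * Xr u1 r + B * Xr u2 r) + mcos (A * Xr u1 r - B * Xr u2 r)) / 2.
  by apply: eq_bigr => r _; exact: e.
rewrite -mulr_suml big_split /=.
have -> : \sum_(r : 'rV[bool]_N) mcos (A * Xr u1 r + B * Xr u2 r)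
        = \sum_(r : 'rV[bool]_N) mcos (\sum_j sg (r 0 j) * (A * u1 j 0 + B * u2 j 0)).
  by apply: eq_bigr => r _; rewrite lin_X.
have -> : \sum_(r : 'rV[bool]_N) mcos (A * Xr u1 r - B * Xr u2 r)
        = \sum_(r : 'rV[bool]_N) mcos (\sum_j sg (r 0 j) * (A * u1 j 0 + (- B) * u2 j 0)).
  by apply: eq_bigr => r _; rewrite -lin_X mulNr.
rewrite !row_sum_cos; ring.
Qed.

Lemma gsum M : \sum_(a : 'I_M * 'I_M) 1 / (1 + (a.1%:R - a.2%:R : RR) ^+ 2) <= 6 * M%:R.
Proof.
rewrite -(pair_bigA _ (fun (j k : 'I_M) => 1 / (1 + (j%:R - k%:R : RR) ^+ 2))) /=.
have -> : 6 * M%:R = \sum_(j < M) 6 :> RR by rewrite sumr_const card_ord mulr_natr.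
by apply: ler_sum => j _; apply: decay_sum.
Qed.

Lemma diff_le M (a : 'I_M * 'I_M) : `|a.1%:R - a.2%:R : RR| <= M%:R.
Proof.
have h1 : a.1%:R < M%:R :> RR by rewrite ltr_nat.
have h2 : a.2%:R < M%:R :> RR by rewrite ltr_nat.
have h3 : 0 <= a.1%:R :> RR by []. have h4 : 0 <= a.2%:R :> RR by [].
rewrite ler_norml; apply/andP; split; lra.
Qed.

Lemma row_bound N (u1 u2 : 'cV[R]_N) (S : pred 'I_N) (tau rho t : R) (M : nat) :
  (0 < M)%nat -> 0 < tau -> 0 <= t ->
  (forall j, S j -> `|u1 j 0| <= tau /\ `|u2 j 0| <= tau) ->
  (forall p q, rho^+2 * (p^+2 + q^+2) <= \sum_(j | S j) (p * u1 j 0 + q * u2 j 0)^+2) ->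
  2 * t * M%:R * tau <= 1 -> 1 <= t^+2 * rho^+2 / 6 ->
  \sum_(r : 'rV[bool]_N) (if (`|Xr u1 r| <= tau) && (`|Xr u2 r| <= tau) then 1 else 0 : RR)
   <= #|{: 'rV[bool]_N}|%:R * (72 / M%:R ^+ 2).
Proof.
move=> M0 tau0 t0 hS hinc htM hl.
set Z := #|{: 'rV[bool]_N}|%:R.
have Mr : 0 < M%:R :> RR by rewrite ltr0n.
have Z0 : 0 <= Z by [].
have M4 : 0 < M%:R ^+ 4 :> RR by apply: exprn_gt0.
have step1 : forall r : 'rV[bool]_N,
    (if (`|Xr u1 r| <= tau) && (`|Xr u2 r| <= tau) then 1 else 0 : RR)
    <= 2 / M%:R ^+ 4 * (K1 M t (Xr u1 r) * K1 M t (Xr u2 r)).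
  move=> r; have k1 := K1_ge0 M t (Xr u1 r); have k2 := K1_ge0 M t (Xr u2 r).
  have c0 : 0 <= 2 / M%:R ^+ 4 :> RR by apply: divr_ge0 => //; apply: ltW.
  case: ifP => [/andP[h1 h2]|_]; last by apply: mulr_ge0 => //; apply: mulr_ge0.
  have tM : 0 <= t * M%:R by apply: mulr_ge0.
  have e1 : `|Xr u1 r| * t * M%:R <= 1/2.
    rewrite -mulrA; have := ler_wpM2r tM h1; lra.
  have e2 : `|Xr u2 r| * t * M%:R <= 1/2.
    rewrite -mulrA; have := ler_wpM2r tM h2; lra.
  have l1 := K1_lb M t (Xr u1 r) t0 e1.
  have l2 := K1_lb M t (Xr u2 r) t0 e2.
  have m2 : 0 <= 49/64 * M%:R ^+ 2 :> RR by apply: mulr_ge0; [lra | apply: sqr_ge0].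
  have hP := ler_pM m2 m2 l1 l2.
  rewrite mulrAC ler_pdivlMr // mul1r.
  have e : 49 / 64 * M%:R ^+ 2 * (49 / 64 * M%:R ^+ 2) = (49/64)^+2 * M%:R ^+ 4 :> RR by ring.
  rewrite e in hP.
  have := ltW M4; lra.
apply: (le_trans (ler_sum _ (fun r _ => step1 r))).
rewrite -mulr_sumr.
have step2 : \sum_(r : 'rV[bool]_N) K1 M t (Xr u1 r) * K1 M t (Xr u2 r)
   = \sum_(a : 'I_M * 'I_M) \sum_(b : 'I_M * 'I_M) \sum_(r : 'rV[bool]_N)
        mcos ((a.1%:R - a.2%:R) * t * Xr u1 r) * mcos ((b.1%:R - b.2%:R) * t * Xr u2 r).
  rewrite /K1; under eq_bigr do rewrite big_distrlr /=.
  rewrite exchange_big /=; apply: eq_bigr => a _.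
  by rewrite exchange_big.
have step3 : forall a b : 'I_M * 'I_M,
   \sum_(r : 'rV[bool]_N) mcos ((a.1%:R - a.2%:R) * t * Xr u1 r) * mcos ((b.1%:R - b.2%:R) * t * Xr u2 r)
   <= Z * (1 / (1 + (a.1%:R - a.2%:R : RR) ^+ 2) * (1 / (1 + (b.1%:R - b.2%:R : RR) ^+ 2))).
  move=> a b; rewrite sum_coscos.
  set p := (a.1%:R - a.2%:R : RR); set q := (b.1%:R - b.2%:R : RR).
  have hp : `|p| <= M%:R := diff_le _ a.
  have hq : `|q| <= M%:R := diff_le _ b.
  have hq' : `|- q| <= M%:R by rewrite normrN.
  have E1 : \prod_j mcos (p * t * u1 j 0 + q * t * u2 j 0) = \prod_j mcos (t * (p * u1 j 0 + q * u2 j 0)).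
    by apply: eq_bigr => j _; congr mcos; ring.
  have E2 : \prod_j mcos (p * t * u1 j 0 + - (q * t) * u2 j 0) = \prod_j mcos (t * (p * u1 j 0 + (- q) * u2 j 0)).
    by apply: eq_bigr => j _; congr mcos; ring.
  rewrite E1 E2.
  have C1 := core_bound _ u1 u2 S tau rho t p q M t0 hS hinc htM hl hp hq.
  have C2 := core_bound _ u1 u2 S tau rho t p (- q) M t0 hS hinc htM hl hp hq'.
  rewrite sqrrN in C2.
  set P1 := \prod_j mcos (t * (p * u1 j 0 + q * u2 j 0)) in C1 *.
  set P2 := \prod_j mcos (t * (p * u1 j 0 + - q * u2 j 0)) in C2 *.
  have -> : 1 / (1 + p ^+ 2) * (1 / (1 + q ^+ 2)) = 1 / ((1 + p ^+ 2) * (1 + q ^+ 2)).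
    by field; apply/andP; split; rewrite paddr_eq0 ?sqr_ge0 // oner_eq0.
  have := ler_norm P1; have := ler_norm P2.
  have Z2 : 0 <= Z / 2 by apply: divr_ge0.
  move=> n2 n1.
  have : Z / 2 * (P1 + P2) <= Z / 2 * (2 * (1 / ((1 + p ^+ 2) * (1 + q ^+ 2)))).
    by apply: ler_wpM2l => //; lra.
  have -> : Z / 2 * (2 * (1 / ((1 + p ^+ 2) * (1 + q ^+ 2)))) = Z * (1 / ((1 + p ^+ 2) * (1 + q ^+ 2))).
    by have h2 : forall x y : RR, x / 2 * (2 * y) = x * y by move=> x y; field.
  done.
rewrite step2.
apply: (@le_trans _ _ (2 / M%:R ^+ 4 * (Z * ((6 * M%:R) * (6 * M%:R))))).
  apply: ler_wpM2l; first by apply: divr_ge0 => //; apply: ltW.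
  apply: (@le_trans _ _ (\sum_(a : 'I_M * 'I_M) \sum_(b : 'I_M * 'I_M)
      Z * (1 / (1 + (a.1%:R - a.2%:R : RR) ^+ 2) * (1 / (1 + (b.1%:R - b.2%:R : RR) ^+ 2))))).
    by apply: ler_sum => a _; apply: ler_sum => b _; apply: step3.
  under eq_bigr do rewrite -mulr_sumr -mulr_sumr.
  rewrite -mulr_sumr; apply: ler_wpM2l => //.
  rewrite -mulr_suml.
  have g0 : 0 <= \sum_(a : 'I_M * 'I_M) 1 / (1 + (a.1%:R - a.2%:R : RR) ^+ 2).
    by apply: sumr_ge0 => a _; apply: divr_ge0 => //; rewrite addr_ge0 // sqr_ge0.
  by apply: ler_pM => //; apply: gsum.
have -> : 2 / M%:R ^+ 4 * (Z * (6 * M%:R * (6 * M%:R))) = Z * (72 / M%:R ^+ 2).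
  by field; rewrite pnatr_eq0 -lt0n.
done.
Qed.

Lemma sum_rows h N (F : 'rV[bool]_N -> RR) :
  \sum_(B : 'M[bool]_(h, N)) \prod_(i < h) F (row i B) = (\sum_(r : 'rV[bool]_N) F r) ^+ h.
Proof.
rewrite -[in RHS](card_ord h) -prodr_const bigA_distr_bigA /=.
pose h0 := fun B : 'M[bool]_(h, N) => [ffun i => row i B].
pose g0 := fun f : {ffun 'I_h -> 'rV[bool]_N} => \matrix_(i, j) f i 0 j.
have bij : bijective h0.
  exists g0.
    by move=> B; apply/matrixP => i j; rewrite /g0 /h0 mxE ffunE mxE.
  move=> f; apply/ffunP => i; rewrite /h0 ffunE; apply/matrixP => i' j.
  by rewrite (ord1 i') !mxE.
rewrite (reindex h0 (onW_bij _ bij)) /=.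
by apply: eq_bigr => B _; apply: eq_bigr => i _; rewrite ffunE.
Qed.

Lemma sgn_row h N (B : 'M[bool]_(h, N)) (u : 'cV[R]_N) i :
  (sgn_mx B *m u) i 0 = Xr u (row i B).
Proof. by rewrite !mxE /Xr; apply: eq_bigr => j _; rewrite !mxE. Qed.

Lemma norminf_ge N (v : 'cV[R]_N) i : `|v i 0| <= norminf v.
Proof. rewrite /norminf; exact: (le_bigmax 0 (fun i => `|v i 0|) i). Qed.

Theorem corollary5p3 :
  exists C1 : R, 1 < C1 /\
  forall rho delta : R, 0 < rho < 1 -> 0 < delta < 1 ->
  exists d0 : nat, forall d : nat, (d0 <= d)%N ->
  forall (h N : nat) (u1 u2 : 'cV[R]_N),
    Bases (2 * d) rho delta u1 u2 ->
    prob_sign (fun B : 'M[bool]_(h, N) =>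
        (norminf (sgn_mx B *m u1) <= 1 / Num.sqrt (delta * d%:R))
        && (norminf (sgn_mx B *m u2) <= 1 / Num.sqrt (delta * d%:R)))
    <= C1 ^+ h * (rho ^+ 4 * delta * d%:R) ^- h.
Proof.
exists 6912; split; first lra.
move=> rho delta /andP[r0 r1] /andP[dl0 dl1].
have rd0 : 0 < rho ^+ 2 * delta by apply: mulr_gt0 => //; apply: exprn_gt0.
exists (Num.truncn (24 / (rho ^+ 2 * delta))).+1.
move=> d hd h N u1 u2 hB.
set D := delta * d%:R.
have hD : 24 < rho ^+ 2 * D.
  have h1 := truncnS_gt (24 / (rho ^+ 2 * delta)).
  have h2 : (Num.truncn (24 / (rho ^+ 2 * delta))).+1%:R <= d%:R :> RR by rewrite ler_nat.
  have h3 : 24 / (rho ^+ 2 * delta) < d%:R by apply: lt_le_trans h2.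
  by move: h3; rewrite ltr_pdivrMr // /D mulrA mulrC.
have D0 : 0 < D.
  have := ltW rd0; have : 0 <= rho ^+ 2 := sqr_ge0 rho.
  move=> a b; rewrite /D; apply: mulr_gt0 => //.
  rewrite ltr0n lt0n; apply/negP => /eqP d0; move: hD; rewrite /D d0 mulr0 mulr0; lra.
set sD := Num.sqrt D.
have sD0 : 0 < sD by rewrite /sD sqrtr_gt0.
have sD2 : sD ^+ 2 = D by rewrite /sD sqr_sqrtr // ltW.
set tau := 1 / sD.
have tau0 : 0 < tau by rewrite /tau divr_gt0.
have tau2 : tau ^+ 2 = 1 / D by rewrite /tau expr_div_n expr1n sD2.
set Y := rho ^+ 2 * D / 24.
have Y1 : 1 <= Y by rewrite /Y ler_pdivlMr //; lra.
set M := Num.truncn (Num.sqrt Y).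
have sY0 : 0 <= Num.sqrt Y := sqrtr_ge0 Y.
have sY2 : Num.sqrt Y ^+ 2 = Y by rewrite sqr_sqrtr //; lra.
have /andP[Mlo Mhi] := truncn_itv sY0.
rewrite -/M in Mlo Mhi.
have M0r : 0 <= M%:R :> RR by [].
have MY : M%:R ^+ 2 <= Y.
  rewrite -sY2; apply: lerXn2r => //; rewrite nnegrE //.
have YM : Y < (M%:R + 1) ^+ 2.
  have Mhi' : Num.sqrt Y < M%:R + 1 by rewrite natr1.
  rewrite -sY2 !expr2; nra.
have M0 : (0 < M)%N.
  rewrite lt0n; apply/negP => /eqP Mz; move: YM; rewrite Mz /= add0r expr1n; lra.
have M1 : 1 <= M%:R :> RR by rewrite ler1n.
have YM4 : Y < 4 * M%:R ^+ 2 by move: YM; rewrite !expr2; nra.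
set t := sD / (2 * M%:R).
have Mr0 : M%:R != 0 :> RR by rewrite pnatr_eq0 -lt0n.
have t0 : 0 <= t by rewrite /t; apply: divr_ge0; [apply: ltW | apply: mulr_ge0].
have htM : 2 * t * M%:R * tau <= 1.
  have -> : 2 * t * M%:R * tau = 1 by rewrite /t /tau; field; rewrite Mr0 /= gt_eqF.
  by [].
have hl : 1 <= t ^+ 2 * rho ^+ 2 / 6.
  have -> : t ^+ 2 * rho ^+ 2 / 6 = Y / M%:R ^+ 2.
    rewrite /t /Y expr_div_n sD2; field; by rewrite Mr0.
  by rewrite ler_pdivlMr ?mul1r // exprn_gt0 // lt0r Mr0.
set S := fun j : 'I_N => u1 j 0 ^+ 2 + u2 j 0 ^+ 2 <= tau ^+ 2.
have hS : forall j, S j -> `|u1 j 0| <= tau /\ `|u2 j 0| <= tau.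
  move=> j; rewrite /S => hj.
  have a1 := sqr_ge0 (u1 j 0); have a2 := sqr_ge0 (u2 j 0).
  have n1 := normr_ge0 (u1 j 0); have n2 := normr_ge0 (u2 j 0).
  have e1 : `|u1 j 0| ^+ 2 = u1 j 0 ^+ 2 by rewrite real_normK ?num_real.
  have e2 : `|u2 j 0| ^+ 2 = u2 j 0 ^+ 2 by rewrite real_normK ?num_real.
  have q1 : `|u1 j 0| ^+ 2 <= tau ^+ 2 by rewrite e1; lra.
  have q2 : `|u2 j 0| ^+ 2 <= tau ^+ 2 by rewrite e2; lra.
  move: q1 q2; rewrite !expr2 => q1 q2.
  split; nra.
have hdt : 2 <= delta * (2 * d)%:R * tau ^+ 2.
  rewrite natrM tau2.
  have -> : delta * (2%:R * d%:R) * (1 / D) = 2 * (D / D) by rewrite /D; ring.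
  by rewrite divff ?gt_eqF // mulr1.
have hinc := incomp N d rho delta tau u1 u2 tau0 hdt (ltW r0) hB.
have hrow := row_bound N u1 u2 S tau rho t M M0 tau0 t0 hS hinc htM hl.
set Fr := fun r : 'rV[bool]_N => (if (`|Xr u1 r| <= tau) && (`|Xr u2 r| <= tau) then 1 else 0 : RR).
set Z := (#|{: 'rV[bool]_N}|%:R : RR).
have Z0 : 0 < Z by rewrite ltr0n card_mx card_bool expn_gt0.
have Fr0 : 0 <= \sum_r Fr r by apply: sumr_ge0 => r _; rewrite /Fr; case: ifP.
have hq : (\sum_r Fr r) / Z <= 6912 / (rho ^+ 4 * D).
  rewrite ler_pdivrMr // mulrC.
  apply: (le_trans hrow); rewrite ler_pM2l //.
  have rD : 0 < rho ^+ 4 * D by apply: mulr_gt0 => //; apply: exprn_gt0.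
  have M2 : 0 < M%:R ^+ 2 :> RR by apply: exprn_gt0; lra.
  rewrite ler_pdivrMr // mulrAC ler_pdivlMr //.
  have r2 : rho ^+ 2 <= 1 by rewrite -(expr1n _ 2); apply: lerXn2r; rewrite ?nnegrE ?ltW.
  have e4 : rho ^+ 4 = rho ^+ 2 * rho ^+ 2 by rewrite -exprD.
  rewrite e4.
  move: YM4; rewrite /Y => YM4.
  have q0 : 0 <= rho ^+ 2 * D by apply: mulr_ge0; rewrite ?sqr_ge0 ?ltW.
  have : rho ^+ 2 * (rho ^+ 2 * D) <= 1 * (rho ^+ 2 * D) by apply: ler_wpM2r.
  rewrite mul1r => hh.
  have -> : 72 * (rho ^+ 2 * rho ^+ 2 * D) = 72 * (rho ^+ 2 * (rho ^+ 2 * D)) by ring.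
  lra.
rewrite /prob_sign.
set P := fun B : 'M[bool]_(h, N) => _.
have hA : #|[set B : 'M[bool]_(h, N) | P B]|%:R <= \sum_(B : 'M[bool]_(h, N)) \prod_(i < h) Fr (row i B) :> RR.
  rewrite -sumr_const big_mkcond /=; apply: ler_sum => B _; rewrite inE.
  case: ifP => hPB; last by apply: prodr_ge0 => i _; rewrite /Fr; case: ifP.
  move: hPB; rewrite /P => /andP[h1 h2].
  rewrite big1 // => i _; rewrite /Fr.
  have -> : `|Xr u1 (row i B)| <= tau.
    by rewrite -sgn_row; apply: le_trans (norminf_ge _ _ i) h1.
  have -> : `|Xr u2 (row i B)| <= tau.
    by rewrite -sgn_row; apply: le_trans (norminf_ge _ _ i) h2.
  by [].
rewrite sum_rows in hA.
have cM : #|{: 'M[bool]_(h, N)}|%:R = Z ^+ h :> RR.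
  by rewrite /Z !card_mx card_bool -natrX -expnM mul1n mulnC.
rewrite cM.
have Zh : 0 < Z ^+ h by apply: exprn_gt0.
apply: (@le_trans _ _ ((\sum_r Fr r) ^+ h / Z ^+ h)).
  by rewrite ler_pM2r // invr_gt0.
rewrite -expr_div_n.
have q0 : 0 <= (\sum_r Fr r) / Z by apply: divr_ge0 => //; apply: ltW.
apply: (@le_trans _ _ ((6912 / (rho ^+ 4 * D)) ^+ h)).
  have p0 : 0 <= 6912 / (rho ^+ 4 * D).
    by apply: divr_ge0; [lra | apply: mulr_ge0; [apply: exprn_ge0; apply: ltW | apply: ltW]].
  by apply: lerXn2r; rewrite ?nnegrE.
by rewrite expr_div_n /D mulrA.
Qed.
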